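(* Let $p$ be an odd prime and let $s$ be an integer with $0\le s\le\frac{p-1}{2}$. Then $$\sum_{k=0}^{\frac{p-1}{2}}\frac{(q;q^2)_k\,(q;q^2)_{k+s}}{(q^2;q^2)_k\,(q^2;q^2)_{k+s}}\equiv \left(\frac{-1}{p}\right)q^{\frac{1-p^2}{4}}\pmod{[p]^2}.$$
   Context: For an indeterminate $q$ and an integer $n\ge 0$: $(a;q)_0=1$ and $(a;q)_n=(1-a)(1-aq)\cdots(1-aq^{n-1})$. For a positive integer $p$, $[p]=\frac{1-q^p}{1-q}=1+q+\cdots+q^{p-1}$. For a prime $p$, $[p]$ is irreducible in $\mathbb{Q}[q]$; for rational functions $A,B$ of $q$ whose denominators are coprime to $[p]$, $A\equiv B\pmod{[p]^r}$ means that $A-B$, written in lowest terms, has numerator divisible by $[p]^r$ in $\mathbb{Q}[q]$. $\left(\frac{\cdot}{p}\right)$ denotes the Legendre symbol modulo $p$. *)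

(* Defs.v *)
From HB Require Import structures.
From mathcomp Require Import all_boot all_order all_algebra.
From mathcomp Require Import fraction.
Set Implicit Arguments. Unset Strict Implicit. Unset Printing Implicit Defensive.
Import Order.TTheory GRing.Theory Num.Theory.
Local Open Scope ring_scope.

Definition Qq : Type := {fraction {poly rat}}.

Definition polyF (P : {poly rat}) : Qq := FracField.tofrac P.

Definition qv : Qq := polyF 'X.

Definition qpoch (R : nzRingType) (a x : R) (n : nat) : R :=
  \prod_(i < n) (1 - a * x ^+ i).

Definition qint (p : nat) : {poly rat} := \sum_(i < p) 'X^i.

Definition qcongr (A B : Qq) (m : {poly rat}) (r : nat) : Prop :=
  exists (n d : {poly rat}),
    [/\ d != 0, coprimep d m, A - B = polyF n / polyF d & m ^+ r %| n].

Definition legendre (a : int) (p : nat) : int :=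
  if (p%:Z %| a)%Z then 0
  else if [exists x : 'I_p, (p%:Z %| (x%:Z) ^+ 2 - a)%Z] then 1 else -1.

(* Main.v *)
Require Import Defs.
From HB Require Import structures.
From mathcomp Require Import all_boot all_order all_algebra.
From mathcomp Require Import fraction.
From mathcomp Require Import all_field.
From mathcomp Require Import ring zify.
Import Order.TTheory GRing.Theory Num.Theory.
Local Open Scope ring_scope.
Definition Id (P : {poly rat}) (r : nat) (x : Qq) : Prop := qcongr x 0 P r.

Lemma polyFD (a b : {poly rat}) : polyF (a + b) = polyF a + polyF b.
Proof. exact: tofracD. Qed.
Lemma polyFM (a b : {poly rat}) : polyF (a * b) = polyF a * polyF b.
Proof. exact: tofracM. Qed.
Lemma polyFN (a : {poly rat}) : polyF (- a) = - polyF a.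
Proof. exact: tofracN. Qed.
Lemma polyFB (a b : {poly rat}) : polyF (a - b) = polyF a - polyF b.
Proof. exact: tofracB. Qed.
Lemma polyF1 : polyF 1 = 1.
Proof. exact: tofrac1. Qed.
Lemma polyF0 : polyF 0 = 0.
Proof. exact: tofrac0. Qed.
Lemma polyF_eq0 (a : {poly rat}) : (polyF a == 0) = (a == 0).
Proof. exact: tofrac_eq0. Qed.
Lemma polyFX (a : {poly rat}) n : polyF (a ^+ n) = polyF a ^+ n.
Proof. by elim: n => [|n IH]; rewrite ?expr0 ?polyF1 // !exprS polyFM IH. Qed.

Lemma Id_def P r x : Id P r x <-> exists n d : {poly rat},
    [/\ d != 0, coprimep d P, x = polyF n / polyF d & P ^+ r %| n].
Proof. rewrite /Id /qcongr subr0. done. Qed.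

Lemma fadd (F : fieldType) (a b c d : F) : b != 0 -> d != 0 ->
  a / b + c / d = (a * d + c * b) / (b * d).
Proof. by move=> hb hd; field; rewrite hb hd. Qed.
Lemma fmul (F : fieldType) (a b c d : F) : b != 0 -> d != 0 ->
  a / b * (c / d) = (a * c) / (b * d).
Proof. by move=> hb hd; field; rewrite hb hd. Qed.

Lemma Id_add P r x y : Id P r x -> Id P r y -> Id P r (x + y).
Proof.
move=> /Id_def [n1 [d1 [d1n c1 -> h1]]] /Id_def [n2 [d2 [d2n c2 -> h2]]].
apply/Id_def; exists (n1 * d2 + n2 * d1), (d1 * d2); split.
- by rewrite mulf_neq0.
- by rewrite coprimepMl c1 c2.
- have e1 : polyF d1 != 0 by rewrite polyF_eq0.
  have e2 : polyF d2 != 0 by rewrite polyF_eq0.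
  by rewrite polyFD !polyFM (fadd _ _ _ _ _ e1 e2).
- by rewrite dvdp_add // dvdp_mulr.
Qed.

Lemma Id_mul P r s x y : Id P r x -> Id P s y -> Id P (r + s) (x * y).
Proof.
move=> /Id_def [n1 [d1 [d1n c1 -> h1]]] /Id_def [n2 [d2 [d2n c2 -> h2]]].
apply/Id_def; exists (n1 * n2), (d1 * d2); split.
- by rewrite mulf_neq0.
- by rewrite coprimepMl c1 c2.
- have e1 : polyF d1 != 0 by rewrite polyF_eq0.
  have e2 : polyF d2 != 0 by rewrite polyF_eq0.
  by rewrite !polyFM (fmul _ _ _ _ _ e1 e2).
- by rewrite exprD dvdp_mul.
Qed.

Lemma Id_opp P r x : Id P r x -> Id P r (- x).
Proof.
move=> /Id_def [n1 [d1 [d1n c1 -> h1]]].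
apply/Id_def; exists (- n1), d1; split => //.
- by rewrite polyFN mulNr.
- by rewrite dvdpNr.
Qed.

Lemma Id_sub P r x y : Id P r x -> Id P r y -> Id P r (x - y).
Proof. by move=> hx hy; apply: Id_add => //; apply: Id_opp. Qed.

Lemma Id_weak P r s x : (s <= r)%N -> Id P r x -> Id P s x.
Proof.
move=> sr /Id_def [n1 [d1 [d1n c1 -> h1]]].
apply/Id_def; exists n1, d1; split => //.
by apply: dvdp_trans h1; apply: dvdp_exp2l.
Qed.

Lemma Id_poly P r n : P ^+ r %| n -> Id P r (polyF n).
Proof.
move=> h; apply/Id_def; exists n, 1; split => //.
- exact: oner_neq0.
- by rewrite coprime1p.
- by rewrite polyF1 divr1.
Qed.

Lemma Id_inv P d : d != 0 -> coprimep d P -> Id P 0 (polyF d)^-1.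
Proof.
move=> dn c; apply/Id_def; exists 1, d; split => //.
by rewrite polyF1 div1r.
Qed.

Lemma Id_0 P r : Id P r 0.
Proof. by rewrite -polyF0; apply: Id_poly; rewrite dvdp0. Qed.

Lemma Id_sum P r n (F : nat -> Qq) : (forall i, (i < n)%N -> Id P r (F i)) ->
  Id P r (\sum_(i < n) F i).
Proof.
elim: n => [|n IH] h; first by rewrite big_ord0; apply: Id_0.
rewrite big_ord_recr /=; apply: Id_add; last exact: h.
by apply: IH => i hi; apply: h; apply: ltnW.
Qed.

Lemma Id_prod P n (F : nat -> Qq) : (forall i, (i < n)%N -> Id P 0 (F i)) ->
  Id P 0 (\prod_(i < n) F i).
Proof.
elim: n => [|n IH] h; first by rewrite big_ord0 -polyF1; apply: Id_poly; rewrite expr0 dvdpp.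
rewrite big_ord_recr /=; apply: (@Id_mul _ 0 0); last exact: h.
by apply: IH => i hi; apply: h; apply: ltnW.
Qed.

Lemma qint_mul p : qint p * ('X - 1) = 'X^p - 1.
Proof.
rewrite /qint; elim: p => [|p IH]; first by rewrite big_ord0 mul0r expr0 subrr.
rewrite big_ord_recr /= mulrDl IH exprS; ring.
Qed.

Lemma qint_dvd p : qint p %| 'X^p - 1.
Proof. by rewrite -qint_mul dvdp_mulr. Qed.

Lemma coprime_Xn p n : (0 < p)%N -> coprimep ('X^n) (qint p).
Proof.
case: p => [//|p] _; apply: coprimep_expl; rewrite coprimep_sym.
have -> : ('X : {poly rat}) = 'X - 0%:P by rewrite subr0.
rewrite coprimep_XsubC /root /qint horner_sum big_ord_recl /= hornerXn expr0.
rewrite big1 ?addr0 ?oner_eq0 // => i _.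
by rewrite hornerXn /bump /= add1n exprS mul0r.
Qed.

Lemma inv_sub1 (F : fieldType) (z : F) : z != 0 -> z^-1 - 1 = (1 - z) / z.
Proof. by move=> hz; field; rewrite hz. Qed.
Lemma inv_sub2 (F : fieldType) (z : F) : z != 0 -> (z - 1) + (z^-1 - 1) = (z - 1) ^+ 2 / z.
Proof. by move=> hz; field; rewrite hz. Qed.

Definition xx (p : nat) : Qq := polyF 'X^p.

Lemma xx_neq0 p : xx p != 0.
Proof. by rewrite /xx polyF_eq0 monic_neq0 // monicXn. Qed.

Definition good (p : nat) (f : Qq -> Qq) : Prop :=
  [/\ Id (qint p) 0 (f 1), Id (qint p) 1 (f (xx p) - f 1),
      Id (qint p) 1 (f (xx p)^-1 - f 1) &
      Id (qint p) 2 ((f (xx p) - f 1) + (f (xx p)^-1 - f 1))].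

Lemma Id_xx1 p : Id (qint p) 1 (xx p - 1).
Proof. by rewrite /xx -polyF1 -polyFB; apply: Id_poly; rewrite expr1 qint_dvd. Qed.

Lemma Id_xxV1 p : (0 < p)%N -> Id (qint p) 1 ((xx p)^-1 - 1).
Proof.
move=> p0; rewrite (inv_sub1 _ _ (xx_neq0 p)) /xx -polyF1 -polyFB.
apply/Id_def; exists (1 - 'X^p), 'X^p; split.
- by rewrite monic_neq0 // monicXn.
- exact: coprime_Xn.
- by [].
- by rewrite expr1 -opprB dvdpNr qint_dvd.
Qed.

Lemma Id_xx2 p : (0 < p)%N -> Id (qint p) 2 ((xx p - 1) + ((xx p)^-1 - 1)).
Proof.
move=> p0; rewrite (inv_sub2 _ _ (xx_neq0 p)) /xx -polyF1 -polyFB -polyFX.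
apply/Id_def; exists (('X^p - 1) ^+ 2), 'X^p; split.
- by rewrite monic_neq0 // monicXn.
- exact: coprime_Xn.
- by [].
- by rewrite dvdp_exp2r // qint_dvd.
Qed.

Lemma Id_1 P : Id P 0 1.
Proof. by rewrite -polyF1; apply: Id_poly; rewrite expr0 dvdpp. Qed.

Lemma good_const p c : Id (qint p) 0 c -> good p (fun _ => c).
Proof. by move=> h; split => //; rewrite subrr ?addr0; apply: Id_0. Qed.

Lemma good_id p : (0 < p)%N -> good p id.
Proof.
move=> p0; split => /=; [exact: Id_1|exact: Id_xx1|exact: Id_xxV1|exact: Id_xx2].
Qed.

Lemma good_inv p : (0 < p)%N -> good p (fun a => a^-1).
Proof.
move=> p0; split => /=; rewrite ?invr1 ?invrK; [exact: Id_1|exact: Id_xxV1|exact: Id_xx1|].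
by rewrite addrC; apply: Id_xx2.
Qed.

Lemma good_ext p f g : (forall a, f a = g a) -> good p f -> good p g.
Proof. by move=> e; rewrite /good !e. Qed.

Lemma good_add p f g : good p f -> good p g -> good p (fun a => f a + g a).
Proof.
move=> [f0 f1 f2 f3] [g0 g1 g2 g3]; split.
- exact: Id_add.
- have -> : f (xx p) + g (xx p) - (f 1 + g 1) = (f (xx p) - f 1) + (g (xx p) - g 1) by ring.
  exact: Id_add.
- have -> : f (xx p)^-1 + g (xx p)^-1 - (f 1 + g 1) = (f (xx p)^-1 - f 1) + (g (xx p)^-1 - g 1) by ring.
  exact: Id_add.
- set A := f (xx p); set B := f (xx p)^-1; set C := g (xx p); set D := g (xx p)^-1.
  have -> : A + C - (f 1 + g 1) + (B + D - (f 1 + g 1)) =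
    (A - f 1 + (B - f 1)) + (C - g 1 + (D - g 1)) by ring.
  exact: Id_add.
Qed.

Lemma good_mul p f g : good p f -> good p g -> good p (fun a => f a * g a).
Proof.
move=> [f0 f1 f2 f3] [g0 g1 g2 g3].
have h11 : forall u v, Id (qint p) 1 u -> Id (qint p) 1 v -> Id (qint p) 1 (u * v).
  by move=> u v hu hv; apply: (@Id_weak _ (1 + 1)) => //; apply: Id_mul.
have h01 : forall u v, Id (qint p) 0 u -> Id (qint p) 1 v -> Id (qint p) 1 (u * v).
  by move=> u v hu hv; apply: (@Id_mul _ 0 1).
have h02 : forall u v, Id (qint p) 0 u -> Id (qint p) 2 v -> Id (qint p) 2 (u * v).
  by move=> u v hu hv; apply: (@Id_mul _ 0 2).
have h112 : forall u v, Id (qint p) 1 u -> Id (qint p) 1 v -> Id (qint p) 2 (u * v).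
  by move=> u v hu hv; apply: (@Id_mul _ 1 1).
set u := f 1 in f0 f1 f2 f3 *; set v := g 1 in g0 g1 g2 g3 *.
set A := f (xx p) in f1 f3 *; set B := f (xx p)^-1 in f2 f3 *.
set C := g (xx p) in g1 g3 *; set D := g (xx p)^-1 in g2 g3 *.
split.
- exact: (@Id_mul _ 0 0).
- have -> : A * C - u * v = u * (C - v) + v * (A - u) + (A - u) * (C - v) by ring.
  apply: Id_add; last exact: h11.
  by apply: Id_add; apply: h01.
- have -> : B * D - u * v = u * (D - v) + v * (B - u) + (B - u) * (D - v) by ring.
  apply: Id_add; last exact: h11.
  by apply: Id_add; apply: h01.
- have -> : A * C - u * v + (B * D - u * v) =
     u * (C - v + (D - v)) + v * (A - u + (B - u)) + (A - u) * (C - v) + (B - u) * (D - v) by ring.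
  apply: Id_add; last exact: h112.
  apply: Id_add; last exact: h112.
  by apply: Id_add; apply: h02.
Qed.

Lemma good_prod p n (F : nat -> Qq -> Qq) : (forall i, (i < n)%N -> good p (F i)) ->
  good p (fun a => \prod_(i < n) F i a).
Proof.
elim: n => [|n IH] h.
  apply: (@good_ext _ (fun _ => 1)); first by move=> a; rewrite big_ord0.
  exact/good_const/Id_1.
apply: (@good_ext _ (fun a => (\prod_(i < n) F i a) * F n a)).
  by move=> a; rewrite big_ord_recr.
apply: good_mul; last exact: h.
by apply: IH => i hi; apply: h; apply: ltnW.
Qed.

Lemma good_sum p n (F : nat -> Qq -> Qq) : (forall i, (i < n)%N -> good p (F i)) ->
  good p (fun a => \sum_(i < n) F i a).
Proof.
elim: n => [|n IH] h.
  apply: (@good_ext _ (fun _ => 0)); first by move=> a; rewrite big_ord0.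
  exact/good_const/Id_0.
apply: (@good_ext _ (fun a => (\sum_(i < n) F i a) + F n a)).
  by move=> a; rewrite big_ord_recr.
apply: good_add; last exact: h.
by apply: IH => i hi; apply: h; apply: ltnW.
Qed.

Lemma half_ok (F : fieldType) (w z : F) : w != 0 -> w = 1 + 1 -> w^-1 * (z + z) = z.
Proof. by move=> h e; rewrite e in h *; field; rewrite h. Qed.

Lemma Id_half P r z : Id P r (z + z) -> Id P r z.
Proof.
move=> h.
have d0 : ((1 + 1 : rat)%:P) != 0 by rewrite polyC_eq0.
have hw : polyF ((1 + 1 : rat)%:P) != 0 by rewrite polyF_eq0.
have ew : polyF ((1 + 1 : rat)%:P) = 1 + 1 by rewrite polyCD polyC1 polyFD polyF1.
rewrite -(half_ok _ _ z hw ew); apply: (@Id_mul _ 0 r) => //.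
apply: Id_inv => //.
by rewrite (eqp_coprimepl _ (_ : _ %= 1)) ?coprime1p // polyC_eqp1.
Qed.

Lemma good_conclude p f T : (0 < p)%N -> good p f -> f (xx p) = T -> f (xx p)^-1 = T ->
  Id (qint p) 2 (f 1 - T).
Proof.
move=> p0 [_ _ _ h] e1 e2; apply: Id_half.
have -> : f 1 - T + (f 1 - T) = - ((f (xx p) - f 1) + (f (xx p)^-1 - f 1)) by rewrite e1 e2; ring.
exact: Id_opp.
Qed.

Lemma cop_gen (A B : {poly rat}) : (forall d, d %| A -> d %| B -> d %| 1) -> coprimep A B.
Proof. by move=> h; rewrite /coprimep -dvdp1; apply: h; [apply: dvdp_gcdl|apply: dvdp_gcdr]. Qed.

Lemma Xn_dvd a b : ('X^a - 1 : {poly rat}) %| 'X^(a * b) - 1.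
Proof.
by rewrite exprM -{2}(expr1n _ b) subrXX dvdp_mulr.
Qed.

Lemma qint_at1 p : (qint p).[1] = p%:R.
Proof.
rewrite /qint horner_sum; under eq_bigr do rewrite hornerXn expr1n.
by rewrite sumr_const card_ord.
Qed.

Lemma coprime_Xn1 p n : prime p -> ~~ (p %| n)%N -> coprimep ('X^n - 1) (qint p).
Proof.
move=> pp pn; apply: cop_gen => d dA dP.
have p0 : (0 < p)%N by apply: prime_gt0.
have [a _ ha] := Bezoutl n p0.
have g1 : gcdn p n = 1%N by apply/eqP; rewrite -/(coprime p n) prime_coprime.
rewrite g1 in ha.
move: ha => /dvdnP [t ht].
have d1 : d %| 'X^(n * a) - 1 by apply: dvdp_trans dA (Xn_dvd _ _).
have d2 : d %| 'X^(p * t) - 1.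
  by apply: dvdp_trans dP (dvdp_trans (qint_dvd p) (Xn_dvd _ _)).
have d3 : d %| 'X - 1.
  have -> : ('X - 1 : {poly rat}) = ('X^(p * t) - 1) - 'X * ('X^(n * a) - 1).
    have e : ('X^(p * t) : {poly rat}) = 'X * 'X^(n * a).
      by rewrite mulnC -ht exprD expr1 (mulnC n a).
    rewrite e; ring.
  by rewrite dvdp_sub // dvdp_mull.
have d4 : d %| (qint p).[1]%:P.
  have -> : (qint p).[1]%:P = qint p - (qint p - (qint p).[1]%:P) by ring.
  rewrite dvdp_sub //; apply: dvdp_trans d3 _.
  by rewrite -polyC1 dvdp_XsubCl /root !hornerE subrr.
rewrite qint_at1 in d4.
rewrite -(eqp_dvdr _ (_ : (p%:R : rat)%:P %= 1)) // polyC_eqp1 pnatr_eq0.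
by rewrite -lt0n.
Qed.

Lemma coprime_1Xn p n : prime p -> ~~ (p %| n)%N -> coprimep (1 - 'X^n) (qint p).
Proof.
move=> pp pn; apply: cop_gen => d dA dP.
have c := @coprime_Xn1 p n pp pn.
have dg : d %| gcdp ('X^n - 1) (qint p).
  by rewrite dvdp_gcd dP -opprB dvdpNr dA.
by apply: dvdp_trans dg _; rewrite dvdp1.
Qed.

Set Implicit Arguments. Unset Strict Implicit. Unset Printing Implicit Defensive.

Lemma qpochS (R : nzRingType) (b x : R) n : qpoch b x n.+1 = qpoch b x n * (1 - b * x ^+ n).
Proof. by rewrite /qpoch big_ord_recr. Qed.
Lemma qpoch0 (R : nzRingType) (b x : R) : qpoch b x 0 = 1.
Proof. by rewrite /qpoch big_ord0. Qed.

Lemma key_gen (F : fieldType) (ak hj K M J T Q : F) :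
  M != 0 -> T != 0 -> 1 - Q * J != 0 -> T - 1 != 0 -> K = Q * M * J / T ->
  ak * (hj * (1 - Q * M * J) / (1 - Q * J) - hj) =
  ak * (1 - M^-1 * K) * (hj * (1 - Q * M * J) / (1 - Q * J)) / (1 - T^-1)
  - ak * (1 - K) * hj / (1 - T^-1).
Proof.
move=> hM hT hQJ hT1 ->.
field. by rewrite hM hT hQJ hT1.
Qed.

Definition aa (F : fieldType) (Q : F) m k := qpoch (Q ^+ m)^-1 Q k / qpoch Q Q k.
Definition hh (F : fieldType) (Q : F) m j := qpoch (Q ^+ m.+1) Q j / qpoch Q Q j.
Definition hp (F : fieldType) (Q : F) m i := if (m <= i)%N then hh Q m (i - m) else 0.
Definition Fs (F : fieldType) (Q : F) m t := \sum_(k < m.+1) aa Q m k * hp Q m (k + t).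
Definition Gt (F : fieldType) (Q : F) m t k :=
  aa Q m k * (1 - Q ^+ k) * hp Q m (k + t) / (1 - (Q ^+ t.+1)^-1).

Definition Qok (F : fieldType) (Q : F) := Q != 0 /\ forall j, (0 < j)%N -> Q ^+ j != 1.

Lemma Qok_1 (F : fieldType) (Q : F) j : Qok Q -> 1 - Q ^+ j.+1 != 0.
Proof. by move=> [_ h]; rewrite subr_eq0 eq_sym h. Qed.

Lemma Qok_X (F : fieldType) (Q : F) j : Qok Q -> Q ^+ j != 0.
Proof. by move=> [h _]; rewrite expf_neq0. Qed.

Lemma pochQ_neq0 (F : fieldType) (Q : F) n : Qok Q -> qpoch Q Q n != 0.
Proof.
move=> hQ; rewrite /qpoch; apply/prodf_neq0 => i _.
by rewrite -exprS; apply: Qok_1.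
Qed.

Lemma frac_step (F : fieldType) (N D b c : F) : D != 0 -> c != 0 ->
  (N * b) / (D * c) * c = N / D * b.
Proof. by move=> hD hc; field; rewrite hD hc. Qed.

Lemma aa_S (F : fieldType) (Q : F) m k : Qok Q ->
  aa Q m k.+1 * (1 - Q ^+ k.+1) = aa Q m k * (1 - (Q ^+ m)^-1 * Q ^+ k).
Proof.
move=> hQ; rewrite /aa !qpochS -exprS.
by apply: frac_step; [apply: pochQ_neq0|apply: Qok_1].
Qed.

Lemma hh_S (F : fieldType) (Q : F) m j : Qok Q ->
  hh Q m j.+1 = hh Q m j * (1 - Q * Q ^+ m * Q ^+ j) / (1 - Q * Q ^+ j).
Proof.
move=> hQ; rewrite /hh !qpochS -exprS.
have h1 := pochQ_neq0 j hQ; have h2 := @Qok_1 _ _ j hQ.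
rewrite -exprS in h2 *.
move: h1 h2; set D := qpoch Q Q j; set N := qpoch _ Q j => h1 h2.
field. by rewrite h1 h2.
Qed.

Lemma aa0 (F : fieldType) (Q : F) m : aa Q m 0 = 1.
Proof. by rewrite /aa !qpoch0 divr1. Qed.
Lemma hh0 (F : fieldType) (Q : F) m : hh Q m 0 = 1.
Proof. by rewrite /hh !qpoch0 divr1. Qed.

Lemma aa_big (F : fieldType) (Q : F) m j : Qok Q -> (m < j)%N -> aa Q m j = 0.
Proof.
move=> hQ mj; rewrite /aa /qpoch (bigD1 (Ordinal mj)) //= mulVf ?subrr ?mul0r //.
exact: Qok_X.
Qed.

Lemma caseB_gen (F : fieldType) (ak K T : F) : K != 0 -> T != 0 -> T - 1 != 0 ->
  ak * (1 - (K * T)^-1 * K) / (1 - T^-1) = ak.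
Proof. by move=> hK hT hT1; field; rewrite hK hT hT1. Qed.

Lemma step (F : fieldType) (Q : F) m t k : Qok Q ->
  aa Q m k * (hp Q m (k + t.+1) - hp Q m (k + t)) = Gt Q m t k.+1 - Gt Q m t k.
Proof.
move=> hQ.
have hT : Q ^+ t.+1 != 0 := Qok_X t.+1 hQ.
have hT1 : Q ^+ t.+1 - 1 != 0.
  by rewrite subr_eq0; case: hQ => _ h; apply: h.
rewrite /Gt /hp addSn addnS.
case: (ltngtP (k + t).+1 m) => hkm.
- have h1 : (m <= k + t)%N = false by apply/negbTE; rewrite -ltnNge; apply: ltn_trans hkm.
  have h2 : (m <= (k + t).+1)%N = false by apply/negbTE; rewrite -ltnNge.
  rewrite h1 subrr !mulr0 !mul0r subrr; done.
- have h1 : (m <= k + t)%N by rewrite -ltnS.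
  have h2 : (m <= (k + t).+1)%N by apply: leqW.
  rewrite ?h1 ?h2 subSn //.
  set j' := (k + t - m)%N.
  have eK : Q ^+ k = Q * Q ^+ m * Q ^+ j' / Q ^+ t.+1.
    apply: (mulIf hT); rewrite divfK // -exprS -!exprD; congr (Q ^+ _).
    rewrite /j'; lia.
  rewrite aa_S // hh_S //.
  apply: key_gen => //; first exact: Qok_X.
  by rewrite -exprS; apply: Qok_1.
- have h1 : (m <= k + t)%N = false by apply/negbTE; rewrite -ltnNge -hkm.
  have h2 : (m <= (k + t).+1)%N by rewrite -hkm.
  rewrite ?h1 ?h2 hkm subnn hh0 !mulr0 !mul0r subr0 mulr1.
  rewrite aa_S //.
  have eM : Q ^+ m = Q ^+ k * Q ^+ t.+1 by rewrite -exprD addnS hkm.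
  rewrite eM subr0 mulr1; symmetry.
  by apply: caseB_gen => //; apply: Qok_X.
Qed.

Lemma Fs_0 (F : fieldType) (Q : F) m : Fs Q m 0 = aa Q m m.
Proof.
rewrite /Fs big_ord_recr /= addn0 /hp leqnn subnn hh0 mulr1 big1 ?add0r // => i _.
by rewrite addn0 leqNgt ltn_ord mulr0.
Qed.

Lemma Fs_S (F : fieldType) (Q : F) m t : Qok Q -> Fs Q m t.+1 = Fs Q m t.
Proof.
move=> hQ; apply/eqP; rewrite -subr_eq0; apply/eqP.
rewrite /Fs -sumrB.
under eq_bigr do rewrite -mulrBr step //.
rewrite -(big_mkord xpredT (fun k => Gt Q m t k.+1 - Gt Q m t k)).
rewrite telescope_sumr // /Gt aa_big // expr0 subrr !mul0r mulr0 !mul0r subrr.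
done.
Qed.

Lemma Fs_all (F : fieldType) (Q : F) m t : Qok Q -> Fs Q m t = aa Q m m.
Proof. by move=> hQ; elim: t => [|t IH]; [exact: Fs_0|rewrite Fs_S]. Qed.

Lemma SA (F : fieldType) (Q : F) m s : Qok Q ->
  \sum_(k < m.+1) aa Q m k * hh Q m (k + s) = aa Q m m.
Proof.
move=> hQ; rewrite -(Fs_all m (s + m) hQ) /Fs; apply: eq_bigr => k _.
by rewrite /hp addnA leq_addl addnK.
Qed.

Lemma SB (F : fieldType) (Q : F) m s : Qok Q -> (s <= m)%N ->
  \sum_(k < m.+1) hh Q m k * aa Q m (k + s) = aa Q m m.
Proof.
move=> hQ sm; rewrite -(Fs_all m (m - s) hQ) /Fs.
rewrite -(big_mkord xpredT (fun k => hh Q m k * aa Q m (k + s))).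
rewrite -(big_mkord xpredT (fun k => aa Q m k * hp Q m (k + (m - s)))).
rewrite (@big_cat_nat _ _ _ (m.+1 - s)) //=; last by rewrite leq_subr.
rewrite [X in _ + X = _]big_nat_cond [X in _ + X = _]big1 ?addr0; last first.
  move=> i /andP [/andP [hi1 hi2] _].
  by rewrite aa_big ?mulr0 //; rewrite -(leq_add2r s) subnK in hi1; [exact: hi1|apply: leqW].
rewrite [X in _ = X](@big_cat_nat _ _ _ s) //=; last by apply: leqW.
rewrite [X in _ = X + _]big_nat_cond [X in _ = X + _]big1 ?add0r; last first.
  move=> i /andP [/andP [_ hi2] _].
  rewrite /hp ifF ?mulr0 //; apply/negbTE; rewrite -ltnNge.
  lia.
rewrite -{3}[s]add0n big_addn; apply: eq_bigr => i _.
rewrite /hp -addnA subnKC // leq_addl addnC addnK mulrC; congr (_ * _).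
Qed.

Lemma aux_step (F : fieldType) (A B c X Y : F) : X != 0 -> Y != 0 ->
  A = c * X^-1 * B -> A * (1 - Y^-1) = c * (-1) * (X * Y)^-1 * (B * (1 - Y)).
Proof. by move=> hX hY ->; field; rewrite hX hY. Qed.

Lemma prod_inv (F : fieldType) (q : F) m : q != 0 ->
  \prod_(i < m) (1 - ((q ^+ 2) ^+ i.+1)^-1) =
  (-1) ^+ m * (q ^+ (m * m.+1))^-1 * qpoch (q ^+ 2) (q ^+ 2) m.
Proof.
move=> hq; elim: m => [|m IH].
  by rewrite big_ord0 qpoch0 expr0 mul1r invr1 mulr1.
rewrite big_ord_recr /= qpochS (exprSr (-1)).
have eQ : q ^+ 2 * (q ^+ 2) ^+ m = (q ^+ 2) ^+ m.+1 by rewrite -exprS.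
rewrite eQ.
have -> : (q ^+ (m.+1 * m.+2)) = q ^+ (m * m.+1) * (q ^+ 2) ^+ m.+1.
  by rewrite -exprM -exprD; congr (_ ^+ _); lia.
apply: aux_step; [by rewrite expf_neq0|by rewrite !expf_neq0|exact: IH].
Qed.

Lemma aa_mm (F : fieldType) (q : F) m : Qok (q ^+ 2) ->
  aa (q ^+ 2) m m = (-1) ^+ m * (q ^+ (m * m.+1))^-1.
Proof.
move=> hQ.
have hq : q != 0 by case: hQ => h _; move: h; rewrite expf_eq0 /= => ->.
rewrite /aa /qpoch (reindex_inj rev_ord_inj) /=.
have -> : \prod_(i < m) (1 - ((q ^+ 2) ^+ m)^-1 * (q ^+ 2) ^+ (m - i.+1)) =
          \prod_(i < m) (1 - ((q ^+ 2) ^+ i.+1)^-1).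
  apply: eq_bigr => i _; congr (1 - _).
  have e : (q ^+ 2) ^+ m = (q ^+ 2) ^+ (m - i.+1) * (q ^+ 2) ^+ i.+1.
    by rewrite -exprD subnK.
  rewrite e invfM mulrAC mulVf ?mul1r //; exact: Qok_X.
rewrite prod_inv // -/(qpoch (q ^+ 2) (q ^+ 2) m) mulfK //; exact: pochQ_neq0.
Qed.

Lemma factR (R : comRingType) n : (n`!)%:R = \prod_(i < n) ((i.+1)%:R : R).
Proof.
elim: n => [|n IH]; first by rewrite fact0 big_ord0.
by rewrite factS natrM big_ord_recr /= IH; ring.
Qed.

Lemma wilson_half p m : prime p -> p = (2 * m).+1 ->
  ((-1) ^+ m * ((m`!)%:R) ^+ 2 : 'F_p) = -1.
Proof.
move=> pp pm.
have p0 : (p%:R : 'F_p) = 0 by exact: pchar_Fp_0.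
have W : (((p.-1)`!)%:R : 'F_p) = -1.
  have := Wilson (prime_gt1 pp); rewrite pp => /esym.
  rewrite (dvdn_pcharf (pchar_Fp pp)) mulrSr addr_eq0 => /eqP ->.
  done.
have e1 : p.-1 = (m + m)%N by rewrite pm /=; lia.
rewrite -[X in _ = X]W e1 (factR _ (m + m)) big_split_ord /=.
rewrite -(factR _ m).
have -> : \prod_(i < m) (((m + i).+1)%:R : 'F_p) = \prod_(i < m) (- ((m - i)%:R)).
  apply: eq_bigr => i _; apply/eqP; rewrite -addr_eq0 -natrD.
  have -> : ((m + i).+1 + (m - i) = p)%N by have := ltn_ord i; lia.
  by rewrite p0.
rewrite prodrN card_ord.
have -> : \prod_(i < m) (((m - i)%:R) : 'F_p) = \prod_(i < m) ((i.+1)%:R).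
  rewrite (reindex_inj rev_ord_inj) /=; apply: eq_bigr => i _.
  by congr (_%:R); have := ltn_ord i; lia.
rewrite -(factR _ m); ring.
Qed.

Lemma dvd_sq1 p (x : nat) : prime p ->
  (p%:Z %| x%:Z ^+ 2 - (-1))%Z = ((x%:R : 'F_p) ^+ 2 == -1).
Proof.
move=> pp.
have -> : (x%:Z ^+ 2 - (-1) = ((x * x + 1)%N)%:Z)%R by rewrite opprK expr2 PoszD PoszM.
rewrite dvdzE /= (dvdn_pcharf (pchar_Fp pp)) natrD natrM -expr2 addr_eq0.
done.
Qed.

Lemma leg_m1 p m : prime p -> p = (2 * m).+1 -> legendre (-1) p = (-1) ^+ m.
Proof.
move=> pp pm; rewrite /legendre.
have -> : (p%:Z %| -1)%Z = false.
  rewrite dvdzE /= dvdn1; apply/negbTE; rewrite neq_ltn prime_gt1 ?orbT //.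
have W := wilson_half pp pm.
case: (boolP (odd m)) => hm.
- have -> : [exists x : 'I_p, (p%:Z %| x%:Z ^+ 2 - -1)%Z] = false.
    apply/negbTE/existsP => [[x]]; rewrite dvd_sq1 // => /eqP hx.
    set y : 'F_p := x%:R in hx.
    have y0 : y != 0.
      apply/eqP => y0; move: hx; rewrite y0 expr0n /= => /eqP.
      by rewrite eq_sym oppr_eq0 oner_eq0.
    have hp : y ^+ p = y by have := expf_card y; rewrite card_Fp.
    have : y ^+ (2 * m) = 1.
      apply: (mulIf y0); rewrite mul1r -exprSr -pm; exact: hp.
    rewrite exprM hx -signr_odd hm expr1 => /eqP.
    rewrite eq_sym -subr_eq0 opprK -mulr2n -(dvdn_pcharf (pchar_Fp pp)).
    rewrite dvdn_prime2 // => /eqP p2.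
    by move: pm; rewrite p2; lia.
  by rewrite -signr_odd hm expr1.
- have -> : [exists x : 'I_p, (p%:Z %| x%:Z ^+ 2 - -1)%Z] = true.
    apply/existsP.
    have p0 : (0 < p)%N by rewrite prime_gt0.
    exists (Ordinal (ltn_pmod (m`!) p0)); rewrite dvd_sq1 //= Fp_nat_mod //.
    rewrite -signr_odd (negbTE hm) expr0 mul1r in W.
    by rewrite W.
  by rewrite -signr_odd (negbTE hm).
Qed.

Lemma qv_X n : qv ^+ n = polyF 'X^n.
Proof. by rewrite /qv polyFX. Qed.

Lemma Id0 P n : Id P 0 (polyF n).
Proof. by apply: Id_poly; rewrite expr0 dvd1p. Qed.

Lemma Xn_neq1 n : (0 < n)%N -> ('X^n : {poly rat}) != 1.
Proof.
move=> n0; apply/eqP => e; have := size_polyXn rat n; rewrite e size_poly1.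
by case: n n0 {e}.
Qed.

Lemma Qok_qv : Qok (qv ^+ 2).
Proof.
split; first by rewrite qv_X polyF_eq0 monic_neq0 // monicXn.
move=> j j0; rewrite -exprM qv_X -polyF1 -subr_eq0 -polyFB polyF_eq0 subr_eq0.
by apply: Xn_neq1; rewrite muln_gt0.
Qed.

Lemma qv_neq0 : qv != 0.
Proof. by rewrite /qv polyF_eq0 polyX_eq0. Qed.

Lemma Id_pochQinv p n : prime p -> odd p -> (n < p)%N -> Id (qint p) 0 (qpoch (qv ^+ 2) (qv ^+ 2) n)^-1.
Proof.
move=> pp po np; rewrite /qpoch -prodfV.
apply: (@Id_prod _ n (fun i => (1 - qv ^+ 2 * (qv ^+ 2) ^+ i)^-1)) => i hi.
have -> : 1 - qv ^+ 2 * (qv ^+ 2) ^+ i = polyF (1 - 'X^(2 * i.+1)).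
  by rewrite -exprS -exprM qv_X polyFB polyF1.
apply: Id_inv.
  by rewrite subr_eq0 eq_sym; apply: Xn_neq1; rewrite muln_gt0.
apply: coprime_1Xn => //; rewrite Euclid_dvdM // negb_or; apply/andP; split.
  rewrite dvdn_prime2 //; apply/negP => /eqP p2; by move: po; rewrite p2.
by rewrite gtnNdvd //; apply: leq_ltn_trans np.
Qed.

Lemma good_lin p c : (0 < p)%N -> Id (qint p) 0 c -> good p (fun a => 1 - a * c).
Proof.
move=> p0 hc.
apply: (@good_ext _ (fun a => (fun _ => 1) a + ((fun _ => - c) a * id a))).
  by move=> a /=; ring.
apply: good_add; first exact/good_const/Id_1.
by apply: good_mul; [apply/good_const/Id_opp|apply: good_id].
Qed.

Lemma good_linV p c : (0 < p)%N -> Id (qint p) 0 c -> good p (fun a => 1 - a^-1 * c).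
Proof.
move=> p0 hc.
apply: (@good_ext _ (fun a => (fun _ => 1) a + ((fun _ => - c) a * (fun a => a^-1) a))).
  by move=> a /=; ring.
apply: good_add; first exact/good_const/Id_1.
by apply: good_mul; [apply/good_const/Id_opp|apply: good_inv].
Qed.

Lemma Id0_qvQ p i : Id (qint p) 0 (qv * (qv ^+ 2) ^+ i).
Proof. by apply: (@Id_mul _ 0 0); [exact: Id0|rewrite -exprM qv_X; exact: Id0]. Qed.

Lemma good_pochA p n : (0 < p)%N -> good p (fun a => qpoch (a * qv) (qv ^+ 2) n).
Proof.
move=> p0.
apply: (@good_ext _ (fun a => \prod_(i < n) (fun i a => 1 - a * (qv * (qv ^+ 2) ^+ i)) i a)).
  by move=> a; rewrite /qpoch; apply: eq_bigr => i _; rewrite mulrA.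
by apply: (@good_prod _ n (fun i a => 1 - a * (qv * (qv ^+ 2) ^+ i))) => i _; apply: good_lin => //; apply: Id0_qvQ.
Qed.

Lemma good_pochB p n : (0 < p)%N -> good p (fun a => qpoch (a^-1 * qv) (qv ^+ 2) n).
Proof.
move=> p0.
apply: (@good_ext _ (fun a => \prod_(i < n) (fun i a => 1 - a^-1 * (qv * (qv ^+ 2) ^+ i)) i a)).
  by move=> a; rewrite /qpoch; apply: eq_bigr => i _; rewrite mulrA.
by apply: (@good_prod _ n (fun i a => 1 - a^-1 * (qv * (qv ^+ 2) ^+ i))) => i _; apply: good_linV => //; apply: Id0_qvQ.
Qed.

Definition Tm s (a : Qq) k := qpoch (a * qv) (qv ^+ 2) k * qpoch (a^-1 * qv) (qv ^+ 2) (k + s) /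
  (qpoch (qv ^+ 2) (qv ^+ 2) k * qpoch (qv ^+ 2) (qv ^+ 2) (k + s)).

Lemma frac4 (F : fieldType) (A B C D : F) : A * B / (C * D) = (A / C) * (B / D).
Proof. by rewrite invfM mulrACA. Qed.

Lemma invmulK (F : fieldType) (A x : F) : x != 0 -> (A * x)^-1 * x = A^-1.
Proof. by move=> hx; rewrite invfM -mulrA mulVf ?mulr1. Qed.

Theorem theorem2p6 (p s : nat) :
  prime p -> odd p -> (s <= (p - 1)./2)%N ->
  qcongr
    (\sum_(k < ((p - 1)./2).+1)
        (qpoch qv (qv ^+ 2) k * qpoch qv (qv ^+ 2) (k + s)) /
        (qpoch (qv ^+ 2) (qv ^+ 2) k * qpoch (qv ^+ 2) (qv ^+ 2) (k + s)))
    ((legendre (-1) p)%:~R * qv ^- ((p ^ 2 - 1) %/ 4))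
    (qint p) 2.
Proof.
move=> pp po; set m := ((p - 1)./2)%N => sm.
have p0 : (0 < p)%N by rewrite prime_gt0.
have pm : p = (2 * m).+1.
  have h := odd_double_half (p - 1).
  rewrite oddB // po /= add0n -/m -mul2n in h; lia.
have gG : good p (fun a => \sum_(k < m.+1) Tm s a k).
  apply: (@good_sum _ m.+1 (fun k a => Tm s a k)) => k hk; rewrite /Tm.
  apply: (@good_ext _ (fun a => (fun a => qpoch (a * qv) (qv ^+ 2) k * qpoch (a^-1 * qv) (qv ^+ 2) (k + s)) a
        * (fun _ => (qpoch (qv ^+ 2) (qv ^+ 2) k * qpoch (qv ^+ 2) (qv ^+ 2) (k + s))^-1) a)).
    by [].
  apply: good_mul; first by apply: good_mul; [apply: good_pochA|apply: good_pochB].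
  apply: good_const; rewrite invfM; apply: (@Id_mul _ 0 0); apply: Id_pochQinv => //; lia.
have xq : xx p = qv ^+ p by rewrite qv_X.
have e1 : xx p * qv = (qv ^+ 2) ^+ m.+1.
  by rewrite xq -exprSr -exprM; congr (_ ^+ _); lia.
have e2 : (xx p)^-1 * qv = ((qv ^+ 2) ^+ m)^-1.
  by rewrite xq pm exprSr -exprM invmulK // qv_neq0.
have hQ := Qok_qv.
have GA : (fun a => \sum_(k < m.+1) Tm s a k) (xx p) = aa (qv ^+ 2) m m.
  rewrite /= -(SB hQ sm); apply: eq_bigr => k _.
  by rewrite /Tm e1 e2 frac4.
have GB : (fun a => \sum_(k < m.+1) Tm s a k) (xx p)^-1 = aa (qv ^+ 2) m m.
  rewrite /= -(SA m s hQ); apply: eq_bigr => k _.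
  by rewrite /Tm invrK e1 e2 frac4.
have := @good_conclude p _ _ p0 gG GA GB.
rewrite aa_mm // (leg_m1 pp pm) intr_sign.
have -> : ((p ^ 2 - 1) %/ 4 = m * m.+1)%N.
  have -> : (p ^ 2 - 1 = 4 * (m * m.+1))%N by rewrite pm -mulnn; nia.
  by rewrite mulKn.
have -> : (\sum_(k < m.+1) Tm s 1 k) =
    \sum_(k < m.+1) (qpoch qv (qv ^+ 2) k * qpoch qv (qv ^+ 2) (k + s)) /
        (qpoch (qv ^+ 2) (qv ^+ 2) k * qpoch (qv ^+ 2) (qv ^+ 2) (k + s)).
  by apply: eq_bigr => k _; rewrite /Tm invr1 !mul1r.
by move/Id_def.
Qed.
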